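(* Let $\lambda>2/\sqrt3$ and let $\mathcal M_2$ be a set of $2$ or $3$ pairs $ab$ of points of $\mathbb R^2$ such that all endpoints of all pairs are pairwise distinct, $\|a\|+\|b\|=\lambda\|a-b\|$ for every $ab\in\mathcal M_2$, and $o\in\operatorname{conv}\{\ell_{ab}: ab\in\mathcal M_2\}$, where $o$ is the origin. Let $G$ be the graph whose vertex set $V(G)$ is the set of all endpoints of pairs in $\mathcal M_2$, with blue edges $E_b(G)=\mathcal M_2$ and red edges $E_r(G)=\{xy: x,y\in V(G),\ \|x\|+\|y\|<\lambda\|x-y\|\}$. If there is a vertex $x\in V(G)$ such that $\angle(x,y)<2\pi/3$ for every $y\in V(G)\setminus\{x\}$, then $G$ contains an alternating cycle.
   Context: $\ell_{ab}=\dfrac{\|b\|}{\|a\|+\|b\|}a+\dfrac{\|a\|}{\|a\|+\|b\|}b$. $\angle(x,y)\in[0,\pi]$ denotes the smallest nonnegative angle between nonzero vectors $x,y$ (all vertices of $G$ are nonzero since $\lambda>1$). An alternating cycle is a simple cycle of even length in $G$ whose edges alternate between blue edges and red edges. *)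

(* Defs.v *)
From Stdlib Require Import Reals Lra List.
Open Scope R_scope.

Definition pt := (R * R)%type.

Definition dot (x y : pt) : R := fst x * fst y + snd x * snd y.
Definition nrm (x : pt) : R := sqrt (dot x x).
Definition psub (x y : pt) : pt := (fst x - fst y, snd x - snd y).
Definition pscale (c : R) (x : pt) : pt := (c * fst x, c * snd x).
Definition padd (x y : pt) : pt := (fst x + fst y, snd x + snd y).
Definition origin : pt := (0, 0).

Definition ell (a b : pt) : pt :=
  padd (pscale (nrm b / (nrm a + nrm b)) a) (pscale (nrm a / (nrm a + nrm b)) b).

Definition angle (x y : pt) : R := acos (dot x y / (nrm x * nrm y)).

Definition endpoints (M : list (pt * pt)) : list pt :=
  flat_map (fun p => fst p :: snd p :: nil) M.

Definition in_conv_hull (o : pt) (ps : list pt) : Prop :=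
  exists w : list R, length w = length ps /\ Forall (fun t => 0 <= t) w /\
    fold_right Rplus 0 w = 1 /\
    fold_right padd origin (map (fun '(t, p) => pscale t p) (combine w ps)) = o.

Definition blue_edge (M : list (pt * pt)) (x y : pt) : Prop :=
  exists a b, In (a, b) M /\ ((x = a /\ y = b) \/ (x = b /\ y = a)).

Definition red_edge (lam : R) (M : list (pt * pt)) (x y : pt) : Prop :=
  In x (endpoints M) /\ In y (endpoints M) /\ nrm x + nrm y < lam * nrm (psub x y).

Definition alternating_cycle (lam : R) (M : list (pt * pt)) (c : list pt) : Prop :=
  NoDup c /\ (forall v, In v c -> In v (endpoints M)) /\
  exists k : nat, (2 <= k)%nat /\ length c = (2 * k)%nat /\
  forall i : nat, (i < 2 * k)%nat ->
    let u := nth i c origin in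
    let v := nth (S i mod (2 * k)) c origin in
    if Nat.even i then blue_edge M u v else red_edge lam M u v.

(* Main.v *)
Require Import Defs.
From Stdlib Require Import Reals Lra List Lia Classical.
Open Scope R_scope.

Definition cr (x v : pt) : R := fst x * snd v - snd x * fst v.
Definition cv (x v : pt) : R := dot v x / (nrm v * nrm x).
Definition sv (x v : pt) : R := cr x v / (nrm v * nrm x).
Definition Tf (x v : pt) : R :=
  if Rle_dec 0 (sv x v) then acos (cv x v) else - acos (cv x v).
Definition Ec (x : pt) (c : R) : pt :=
  (cos c * fst x - sin c * snd x, cos c * snd x + sin c * fst x).

Lemma dot_nonneg v : 0 <= dot v v.
Proof. destruct v as [a b]; unfold dot; simpl; nra. Qed.

Lemma nrm_nonneg v : 0 <= nrm v.
Proof. unfold nrm; apply sqrt_pos. Qed.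

Lemma nrm_sq v : nrm v * nrm v = dot v v.
Proof. unfold nrm; apply sqrt_sqrt, dot_nonneg. Qed.

Lemma nrm_pos v : v <> origin -> 0 < nrm v.
Proof.
  intro H. unfold nrm; apply sqrt_lt_R0. destruct v as [a b]; unfold dot; simpl.
  destruct (Req_dec a 0), (Req_dec b 0); subst; try nra.
  exfalso; apply H; reflexivity.
Qed.

Lemma cs_sq x v : x <> origin -> v <> origin -> cv x v * cv x v + sv x v * sv x v = 1.
Proof.
  intros Hx Hv. pose proof (nrm_pos x Hx); pose proof (nrm_pos v Hv).
  assert (E : dot v x * dot v x + cr x v * cr x v = (nrm v * nrm v) * (nrm x * nrm x)).
  { rewrite !nrm_sq. destruct x, v; unfold dot, cr; simpl; ring. }
  unfold cv, sv.
  transitivity ((dot v x * dot v x + cr x v * cr x v) / ((nrm v * nrm x) * (nrm v * nrm x))).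
  - field; lra.
  - rewrite E. field; lra.
Qed.

Lemma cv_bound x v : x <> origin -> v <> origin -> -1 <= cv x v <= 1.
Proof. intros Hx Hv; pose proof (cs_sq x v Hx Hv); nra. Qed.

Lemma cos_T x v : x <> origin -> v <> origin -> cos (Tf x v) = cv x v.
Proof.
  intros Hx Hv. unfold Tf; destruct Rle_dec; [|rewrite cos_neg]; apply cos_acos, cv_bound; auto.
Qed.

Lemma sin_T x v : x <> origin -> v <> origin -> sin (Tf x v) = sv x v.
Proof.
  intros Hx Hv. pose proof (cs_sq x v Hx Hv).
  assert (E : 1 - (cv x v)² = Rsqr (sv x v)) by (unfold Rsqr; lra).
  unfold Tf; destruct Rle_dec.
  - rewrite sin_acos by (apply cv_bound; auto). rewrite E, sqrt_Rsqr; auto.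
  - rewrite sin_neg, sin_acos by (apply cv_bound; auto). rewrite E, sqrt_Rsqr_abs, Rabs_left; lra.
Qed.

Lemma Tf_abs x v : Rabs (Tf x v) = acos (cv x v).
Proof.
  pose proof (acos_bound (cv x v)).
  unfold Tf; destruct Rle_dec; [rewrite Rabs_right|rewrite Rabs_Ropp, Rabs_right]; lra.
Qed.

Lemma Tf_self x : x <> origin -> Tf x x = 0.
Proof.
  intro Hx. pose proof (nrm_pos x Hx).
  assert (cv x x = 1) by (unfold cv; rewrite nrm_sq; field; rewrite <- nrm_sq; nra).
  assert (sv x x = 0) by (unfold sv, cr; destruct x; simpl; field; lra).
  unfold Tf; rewrite H0, H1; destruct Rle_dec; [apply acos_1|lra].
Qed.

Lemma dot_T x v w : x <> origin -> v <> origin -> w <> origin ->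
  dot v w = nrm v * nrm w * cos (Tf x v - Tf x w).
Proof.
  intros Hx Hv Hw. pose proof (nrm_pos x Hx); pose proof (nrm_pos v Hv); pose proof (nrm_pos w Hw).
  rewrite cos_minus, !cos_T, !sin_T by auto. unfold cv, sv.
  assert (E : dot v x * dot w x + cr x v * cr x w = (nrm x * nrm x) * dot v w).
  { rewrite nrm_sq. destruct x, v, w; unfold dot, cr; simpl; ring. }
  transitivity (((nrm x * nrm x) * dot v w) / (nrm x * nrm x)).
  - field; lra.
  - rewrite <- E. field; lra.
Qed.

Lemma dot_E x v c : x <> origin -> v <> origin ->
  dot v (Ec x c) = nrm v * nrm x * cos (Tf x v - c).
Proof.
  intros Hx Hv. pose proof (nrm_pos x Hx); pose proof (nrm_pos v Hv).
  rewrite cos_minus, cos_T, sin_T by auto. unfold cv, sv.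
  transitivity ((nrm v * nrm x) * ((dot v x * cos c + cr x v * sin c) / (nrm v * nrm x))).
  - field_simplify; [|lra]. destruct x, v; unfold dot, cr, Ec; simpl. field.
  - field; lra.
Qed.

Lemma dot_padd p q e : dot (padd p q) e = dot p e + dot q e.
Proof. destruct p, q, e; unfold dot, padd; simpl; ring. Qed.
Lemma dot_pscale t p e : dot (pscale t p) e = t * dot p e.
Proof. destruct p, e; unfold dot, pscale; simpl; ring. Qed.
Lemma dot_origin e : dot origin e = 0.
Proof. destruct e; unfold dot, origin; simpl; ring. Qed.

Lemma dot_ell x a b c : x <> origin -> a <> origin -> b <> origin ->
  dot (ell a b) (Ec x c) =
  (2 * nrm a * nrm b * nrm x / (nrm a + nrm b) * cos ((Tf x a - Tf x b)/2))
   * cos ((Tf x a + Tf x b)/2 - c).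
Proof.
  intros Hx Ha Hb. pose proof (nrm_pos a Ha); pose proof (nrm_pos b Hb).
  unfold ell. rewrite dot_padd, !dot_pscale, !dot_E by auto.
  transitivity (nrm a * nrm b * nrm x / (nrm a + nrm b) * (cos (Tf x a - c) + cos (Tf x b - c))).
  - field; lra.
  - rewrite form1.
    replace ((Tf x a - c - (Tf x b - c)) / 2) with ((Tf x a - Tf x b)/2) by field.
    replace ((Tf x a - c + (Tf x b - c)) / 2) with ((Tf x a + Tf x b)/2 - c) by field.
    field; lra.
Qed.

Lemma cos_abs d : cos (Rabs d) = cos d.
Proof. unfold Rabs; destruct Rcase_abs; [rewrite cos_neg|]; auto. Qed.

Lemma cos_le_half d : 2 * PI / 3 <= Rabs d <= 4 * PI / 3 -> cos d <= -1/2.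
Proof.
  intro H. rewrite <- (cos_abs d).
  set (y := Rabs d) in *.
  replace y with ((y - PI) + PI) by ring. rewrite neg_cos.
  assert (cos (Rabs (y - PI)) >= 1/2).
  { rewrite <- cos_PI3. pose proof PI_RGT_0.
    destruct (Req_dec (Rabs (y - PI)) (PI/3)) as [E|E]; [rewrite E; lra|].
    assert (Rabs (y - PI) <= PI / 3) by (apply Rabs_le; lra).
    assert (Rabs (y - PI) < PI / 3) by lra.
    left. apply Rlt_gt. apply (cos_decreasing_1 (Rabs (y - PI)) (PI/3)); pose proof (Rabs_pos (y - PI)); lra. }
  rewrite cos_abs in H0. lra.
Qed.

Lemma sqrt3_facts : 0 < sqrt 3 /\ sqrt 3 * sqrt 3 = 3.
Proof. split; [apply sqrt_lt_R0; lra| apply sqrt_sqrt; lra]. Qed.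

Lemma red_core lam v w x : 2 / sqrt 3 < lam -> x <> origin -> v <> origin -> w <> origin ->
  cos (Tf x v - Tf x w) <= -1/2 -> nrm v + nrm w < lam * nrm (psub v w).
Proof.
  intros Hl Hx Hv Hw Hc. destruct sqrt3_facts as [H3 H3'].
  assert (Hl' : 2 < lam * sqrt 3).
  { apply (Rmult_lt_compat_r (sqrt 3)) in Hl; auto. replace (2 / sqrt 3 * sqrt 3) with 2 in Hl by (field; lra). lra. }
  pose proof (nrm_pos v Hv); pose proof (nrm_pos w Hw).
  assert (Hd : dot v w <= - (nrm v * nrm w) / 2).
  { rewrite (dot_T x v w) by auto. assert (0 < nrm v * nrm w) by (apply Rmult_lt_0_compat; auto). nra. }
  assert (Hs : nrm (psub v w) * nrm (psub v w) = nrm v * nrm v + nrm w * nrm w - 2 * dot v w).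
  { rewrite !nrm_sq. destruct v, w; unfold dot, psub; simpl; ring. }
  set (s := nrm (psub v w)) in *. pose proof (nrm_nonneg (psub v w)) as Hs0. fold s in Hs0.
  set (p := nrm v + nrm w).
  pose proof (Rle_0_sqr (nrm v - nrm w)) as Hsq; unfold Rsqr in Hsq.
  assert (Hsp : 3 * (p * p) <= 4 * (s * s)).
 { unfold p. rewrite Hs. nra. }
  destruct (Rlt_or_le p (lam * s)) as [|Hle]; auto. exfalso.
  assert (lam * s * (lam * s) <= p * p).
  { assert (0 < lam) by (clear - Hl' H3; nra). assert (0 <= lam * s) by (apply Rmult_le_pos; lra).
    apply Rmult_le_compat; lra. }
  assert (Hp : 0 < p) by (unfold p; lra).
  assert (H4 : 4 < (lam*sqrt 3)*(lam*sqrt 3)) by (clear - Hl'; nra).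
  assert (E3 : (lam*sqrt 3)*(lam*sqrt 3) = 3*(lam*lam)).
  { replace ((lam*sqrt 3)*(lam*sqrt 3)) with ((lam*lam)*(sqrt 3*sqrt 3)) by ring. rewrite H3'. ring. }
  assert (A1 : 4 * (p*p) < 3*(lam*lam)*(p*p)).
  { rewrite <- E3. apply Rmult_lt_compat_r; nra. }
  assert (A2 : (lam*lam) * (3*(p*p)) <= (lam*lam) * (4*(s*s))).
  { apply Rmult_le_compat_l; nra. }
  nra.
Qed.

Lemma nrm_origin_sub b : nrm (psub origin b) = nrm b.
Proof. unfold nrm; f_equal; destruct b; unfold dot, psub, origin; simpl; ring. Qed.
Lemma nrm_sub_origin a : nrm (psub a origin) = nrm a.
Proof. unfold nrm; f_equal; destruct a; unfold dot, psub, origin; simpl; ring. Qed.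

Lemma nrm_zero v : nrm v = 0 -> v = origin.
Proof.
  intro H. pose proof (nrm_sq v). rewrite H in H0. destruct v as [a b]; unfold dot in H0; simpl in H0.
  assert (a = 0) by nra. assert (b = 0) by nra. subst; reflexivity.
Qed.

Lemma blue_nonzero lam a b : 1 < lam -> a <> b -> nrm a + nrm b = lam * nrm (psub a b) ->
  a <> origin /\ b <> origin.
Proof.
  intros Hl Hab He. split; intro E; subst.
  - rewrite nrm_origin_sub in He. unfold nrm at 1 in He. rewrite dot_origin, sqrt_0 in He.
    pose proof (nrm_nonneg b). assert (nrm b = 0) by nra. apply Hab; symmetry; apply nrm_zero; auto.
  - rewrite nrm_sub_origin in He. unfold nrm at 2 in He. rewrite dot_origin, sqrt_0 in He.
    pose proof (nrm_nonneg a). assert (nrm a = 0) by nra. apply Hab; apply nrm_zero; auto.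
Qed.

Lemma Rabs_ge_of z k : (k <= z \/ z <= - k) -> 0 <= k -> k <= Rabs z.
Proof. intros [H|H] Hk; unfold Rabs; destruct Rcase_abs; lra. Qed.

Lemma Rabs_cases z k : k <= Rabs z -> k <= z \/ z <= - k.
Proof. unfold Rabs; destruct Rcase_abs; intros; lra. Qed.

Lemma key3 m1 m2 m3 g1 g2 g3 w1 w2 w3 : 0<g1 -> 0<g2 -> 0<g3 -> 0<=w1 -> 0<=w2 -> 0<=w3 ->
  w1+w2+w3 = 1 ->
  (forall c, w1*(g1*cos(m1-c)) + w2*(g2*cos(m2-c)) + w3*(g3*cos(m3-c)) = 0) ->
  PI <= Rabs(m1-m2) \/ PI <= Rabs(m2-m3) \/ PI <= Rabs(m1-m3).
Proof.
  intros G1 G2 G3 W1 W2 W3 Ws Hc.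
  destruct (Rle_or_lt PI (Rabs (m1-m2))) as [|A]; [left; auto|].
  destruct (Rle_or_lt PI (Rabs (m2-m3))) as [|B]; [right; left; auto|].
  destruct (Rle_or_lt PI (Rabs (m1-m3))) as [|C]; [right; right; auto|].
  exfalso. apply Rabs_def2 in A, B, C.
  set (c := (Rmin m1 (Rmin m2 m3) + Rmax m1 (Rmax m2 m3)) / 2).
  assert (P : forall m, (m = m1 \/ m = m2 \/ m = m3) -> 0 < cos (m - c)).
  { intros m Hm. apply cos_gt_0; unfold c, Rmin, Rmax;
    repeat destruct Rle_dec; destruct Hm as [->|[->| ->]]; lra. }
  pose proof (P m1 ltac:(auto)); pose proof (P m2 ltac:(auto)); pose proof (P m3 ltac:(auto)).
  specialize (Hc c).
  assert (0 < g1 * cos (m1 - c)) by (apply Rmult_lt_0_compat; auto).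
  assert (0 < g2 * cos (m2 - c)) by (apply Rmult_lt_0_compat; auto).
  assert (0 < g3 * cos (m3 - c)) by (apply Rmult_lt_0_compat; auto).
  destruct (Rle_or_lt w1 0).
  - assert (w1 = 0) by lra. subst.
    destruct (Rle_or_lt w2 0).
    + assert (w2 = 0) by lra. subst. assert (w3 = 1) by lra. subst. lra.
    + assert (0 < w2 * (g2 * cos (m2 - c))) by (apply Rmult_lt_0_compat; auto).
      assert (0 <= w3 * (g3 * cos (m3 - c))) by (apply Rmult_le_pos; lra). lra.
  - assert (0 < w1 * (g1 * cos (m1 - c))) by (apply Rmult_lt_0_compat; auto).
    assert (0 <= w2 * (g2 * cos (m2 - c))) by (apply Rmult_le_pos; lra).
    assert (0 <= w3 * (g3 * cos (m3 - c))) by (apply Rmult_le_pos; lra). lra.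
Qed.

Lemma cycle lam M x a b a' b' :
  2 / sqrt 3 < lam -> x <> origin -> a <> origin -> b <> origin -> a' <> origin -> b' <> origin ->
  In (a, b) M -> In (a', b') M ->
  In a (endpoints M) -> In b (endpoints M) -> In a' (endpoints M) -> In b' (endpoints M) ->
  NoDup (a :: b :: a' :: b' :: nil) ->
  Rabs (Tf x a) < 2 * PI / 3 -> Rabs (Tf x b) < 2 * PI / 3 ->
  Rabs (Tf x a') < 2 * PI / 3 -> Rabs (Tf x b') < 2 * PI / 3 ->
  PI <= Rabs ((Tf x a' + Tf x b')/2 - (Tf x a + Tf x b)/2) ->
  exists c, alternating_cycle lam M c.
Proof.
  intros Hl Hx Ha Hb Ha' Hb' Iab Iab' Ea Eb Ea' Eb' ND Ta Tb Ta' Tb' Hm.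
  pose proof PI_RGT_0.
  apply Rabs_def2 in Ta, Tb, Ta', Tb'.
  apply Rabs_cases in Hm.
  assert (R1 : cos (Tf x b - Tf x b') <= -1/2).
  { apply cos_le_half. split; [apply Rabs_ge_of; lra|apply Rabs_le; lra]. }
  assert (R2 : cos (Tf x a' - Tf x a) <= -1/2).
  { apply cos_le_half. split; [apply Rabs_ge_of; lra|apply Rabs_le; lra]. }
  pose proof (red_core lam b b' x Hl Hx Hb Hb' R1) as Red1.
  pose proof (red_core lam a' a x Hl Hx Ha' Ha R2) as Red2.
  exists (a :: b :: b' :: a' :: nil).
  inversion ND as [|? ? N1 ND1]; subst. inversion ND1 as [|? ? N2 ND2]; subst.
  inversion ND2 as [|? ? N3 ND3]; subst. simpl in N1, N2, N3.
  split; [|split].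
  - repeat constructor; simpl; intuition.
  - intros v Hv; simpl in Hv; intuition congruence.
  - exists 2%nat. split; [lia|split; [reflexivity|]].
    intros i Hi. destruct i as [|[|[|[|i]]]]; [..|lia]; simpl.
    + exists a, b; split; auto.
    + unfold red_edge; auto.
    + exists a', b'; split; auto.
    + unfold red_edge; auto.
Qed.

Lemma lam_gt1 lam : 2 / sqrt 3 < lam -> 1 < lam.
Proof.
  intro H. destruct sqrt3_facts as [H3 H3'].
  assert (E : 2 / sqrt 3 * sqrt 3 = 2) by (field; lra).
  assert (sqrt 3 < 2) by nra.
  destruct (Rle_or_lt (2 / sqrt 3) 1); [|lra].
  assert (2 / sqrt 3 * sqrt 3 <= 1 * sqrt 3) by (apply Rmult_le_compat_r; lra). lra.
Qed.

Lemma dot_comm u v : dot u v = dot v u.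
Proof. unfold dot; ring. Qed.

Lemma Tbound x y : x <> origin -> (y <> x -> angle x y < 2 * PI / 3) -> Rabs (Tf x y) < 2 * PI / 3.
Proof.
  intros Hx H. pose proof PI_RGT_0.
  destruct (classic (y = x)) as [->|Hne].
  - rewrite Tf_self by auto. rewrite Rabs_R0. lra.
  - rewrite Tf_abs. specialize (H Hne). unfold angle in H. unfold cv.
    rewrite dot_comm, Rmult_comm. exact H.
Qed.

Lemma pairL lam x a b : 2 / sqrt 3 < lam -> x <> origin -> a <> origin -> b <> origin ->
  nrm a + nrm b = lam * nrm (psub a b) ->
  Rabs (Tf x a) < 2 * PI / 3 -> Rabs (Tf x b) < 2 * PI / 3 ->
  0 < 2 * nrm a * nrm b * nrm x / (nrm a + nrm b) * cos ((Tf x a - Tf x b)/2).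
Proof.
  intros Hl Hx Ha Hb He Ta Tb. pose proof PI_RGT_0.
  pose proof (nrm_pos a Ha); pose proof (nrm_pos b Hb); pose proof (nrm_pos x Hx).
  assert (Hc : -1/2 < cos (Tf x a - Tf x b)).
  { destruct (Rlt_or_le (-1/2) (cos (Tf x a - Tf x b))) as [|Hle]; auto.
    pose proof (red_core lam a b x Hl Hx Ha Hb Hle). lra. }
  apply Rabs_def2 in Ta, Tb.
  assert (Hd : Rabs (Tf x a - Tf x b) < 2 * PI / 3).
  { destruct (Rlt_or_le (Rabs (Tf x a - Tf x b)) (2 * PI / 3)) as [|Hle]; auto.
    assert (Rabs (Tf x a - Tf x b) <= 4 * PI / 3) by (apply Rabs_le; lra).
    pose proof (cos_le_half (Tf x a - Tf x b) (conj Hle H3)). lra. }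
  apply Rabs_def2 in Hd.
  apply Rmult_lt_0_compat.
  - unfold Rdiv. apply Rmult_lt_0_compat; [|apply Rinv_0_lt_compat; lra].
    repeat apply Rmult_lt_0_compat; lra.
  - apply cos_gt_0; lra.
Qed.

Lemma nd4 (a1 b1 a2 b2 : pt) : NoDup (a1 :: b1 :: a2 :: b2 :: nil) ->
  a1 <> b1 /\ a2 <> b2.
Proof.
  intro ND. inversion ND as [|? ? N1 ND1]; subst. inversion ND1 as [|? ? N2 ND2]; subst.
  inversion ND2 as [|? ? N3 ND3]; subst. simpl in *. split; intro; subst; tauto.
Qed.

Lemma nd6 (a1 b1 a2 b2 a3 b3 : pt) : NoDup (a1 :: b1 :: a2 :: b2 :: a3 :: b3 :: nil) ->
  NoDup (a1 :: b1 :: a2 :: b2 :: nil) /\ NoDup (a2 :: b2 :: a3 :: b3 :: nil) /\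
  NoDup (a1 :: b1 :: a3 :: b3 :: nil).
Proof.
  intro ND. inversion ND as [|? ? N1 ND1]; subst. inversion ND1 as [|? ? N2 ND2]; subst.
  inversion ND2 as [|? ? N3 ND3]; subst. inversion ND3 as [|? ? N4 ND4]; subst.
  inversion ND4 as [|? ? N5 ND5]; subst. simpl in *.
  split; [|split]; repeat constructor; simpl; tauto.
Qed.

Theorem lemma2 (lam : R) (M : list (pt * pt)) :
  2 / sqrt 3 < lam ->
  (length M = 2%nat \/ length M = 3%nat) ->
  NoDup (endpoints M) ->
  (forall a b, In (a, b) M -> nrm a + nrm b = lam * nrm (psub a b)) ->
  in_conv_hull origin (map (fun p => ell (fst p) (snd p)) M) ->
  (exists x, In x (endpoints M) /\
     forall y, In y (endpoints M) -> y <> x -> angle x y < 2 * PI / 3) ->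
  exists c : list pt, alternating_cycle lam M c.
Proof.
  intros Hl Hlen ND Hblue Hhull [x [Hxin Hang]].
  pose proof (lam_gt1 lam Hl) as Hl1. pose proof PI_RGT_0.
  destruct Hlen as [Hlen|Hlen];
    destruct M as [|[a1 b1] [|[a2 b2] [|[a3 b3] [|]]]]; simpl in Hlen; try discriminate.
  -
    pose proof (nd4 _ _ _ _ ND) as [D1 D2].
    assert (E1 := Hblue a1 b1 ltac:(simpl; auto)).
    assert (E2 := Hblue a2 b2 ltac:(simpl; auto)).
    destruct (blue_nonzero lam a1 b1 Hl1 D1 E1) as [Za1 Zb1].
    destruct (blue_nonzero lam a2 b2 Hl1 D2 E2) as [Za2 Zb2].
    assert (Hx : x <> origin) by (simpl in Hxin; intuition congruence).
    assert (TB : forall v, In v (endpoints ((a1,b1)::(a2,b2)::nil)) -> Rabs (Tf x v) < 2 * PI / 3).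
    { intros v Hv. apply Tbound; auto. }
    pose proof (TB a1 ltac:(simpl; auto)); pose proof (TB b1 ltac:(simpl; auto)).
    pose proof (TB a2 ltac:(simpl; auto)); pose proof (TB b2 ltac:(simpl; auto)).
    pose proof (pairL lam x a1 b1 Hl Hx Za1 Zb1 E1 H0 H1) as G1.
    pose proof (pairL lam x a2 b2 Hl Hx Za2 Zb2 E2 H2 H3) as G2.
    destruct Hhull as [w [Hw [Hpos [Hsum Hf]]]].
    destruct w as [|w1 [|w2 [|]]]; simpl in Hw; try discriminate.
    inversion Hpos as [|? ? P1 Hpos1]; subst. inversion Hpos1 as [|? ? P2 _]; subst.
    cbn [fold_right map combine fst snd] in Hsum, Hf.
    destruct (key3 ((Tf x a1 + Tf x b1)/2) ((Tf x a2 + Tf x b2)/2) ((Tf x a1 + Tf x b1)/2)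
      _ _ _ w1 w2 0 G1 G2 G1 P1 P2 (Rle_refl 0) ltac:(lra)) as [K|[K|K]].
    + intro c. apply (f_equal (fun v => dot v (Ec x c))) in Hf.
      rewrite !dot_padd, !dot_pscale, !dot_origin, !dot_ell in Hf by auto. lra.
    + apply (cycle lam _ x a1 b1 a2 b2); simpl; auto.
      rewrite Rabs_minus_sym; auto.
    + apply (cycle lam _ x a1 b1 a2 b2); simpl; auto.
    + replace ((Tf x a1 + Tf x b1) / 2 - (Tf x a1 + Tf x b1) / 2) with 0 in K by ring.
      rewrite Rabs_R0 in K. lra.
  -
    destruct (nd6 _ _ _ _ _ _ ND) as [N12 [N23 N13]].
    pose proof (nd4 _ _ _ _ N12) as [D1 D2]. pose proof (nd4 _ _ _ _ N23) as [_ D3].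
    assert (E1 := Hblue a1 b1 ltac:(simpl; auto)).
    assert (E2 := Hblue a2 b2 ltac:(simpl; auto)).
    assert (E3 := Hblue a3 b3 ltac:(simpl; auto)).
    destruct (blue_nonzero lam a1 b1 Hl1 D1 E1) as [Za1 Zb1].
    destruct (blue_nonzero lam a2 b2 Hl1 D2 E2) as [Za2 Zb2].
    destruct (blue_nonzero lam a3 b3 Hl1 D3 E3) as [Za3 Zb3].
    assert (Hx : x <> origin) by (simpl in Hxin; intuition congruence).
    assert (TB : forall v, In v (endpoints ((a1,b1)::(a2,b2)::(a3,b3)::nil)) -> Rabs (Tf x v) < 2 * PI / 3).
    { intros v Hv. apply Tbound; auto. }
    pose proof (TB a1 ltac:(simpl; auto)); pose proof (TB b1 ltac:(simpl; auto)).
    pose proof (TB a2 ltac:(simpl; auto)); pose proof (TB b2 ltac:(simpl; auto)).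
    pose proof (TB a3 ltac:(simpl; auto 6)); pose proof (TB b3 ltac:(simpl; auto 7)).
    pose proof (pairL lam x a1 b1 Hl Hx Za1 Zb1 E1 H0 H1) as G1.
    pose proof (pairL lam x a2 b2 Hl Hx Za2 Zb2 E2 H2 H3) as G2.
    pose proof (pairL lam x a3 b3 Hl Hx Za3 Zb3 E3 H4 H5) as G3.
    destruct Hhull as [w [Hw [Hpos [Hsum Hf]]]].
    destruct w as [|w1 [|w2 [|w3 [|]]]]; simpl in Hw; try discriminate.
    inversion Hpos as [|? ? P1 Hpos1]; subst. inversion Hpos1 as [|? ? P2 Hpos2]; subst.
    inversion Hpos2 as [|? ? P3 _]; subst.
    cbn [fold_right map combine fst snd] in Hsum, Hf.
    destruct (key3 ((Tf x a1 + Tf x b1)/2) ((Tf x a2 + Tf x b2)/2) ((Tf x a3 + Tf x b3)/2)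
      _ _ _ w1 w2 w3 G1 G2 G3 P1 P2 P3 ltac:(lra)) as [K|[K|K]].
    + intro c. apply (f_equal (fun v => dot v (Ec x c))) in Hf.
      rewrite !dot_padd, !dot_pscale, !dot_origin, !dot_ell in Hf by auto. lra.
    + apply (cycle lam _ x a1 b1 a2 b2); simpl; auto 8.
      rewrite Rabs_minus_sym; auto.
    + apply (cycle lam _ x a2 b2 a3 b3); simpl; auto 8.
      rewrite Rabs_minus_sym; auto.
    + apply (cycle lam _ x a1 b1 a3 b3); simpl; auto 8.
      rewrite Rabs_minus_sym; auto.
Qed.
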